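(* Let $(M,S)$ be a covered map with $\Delta(M,S)=(M,(I,O))$. Then $\Delta(M^*,\bar S)=(M^*,(O,I))$, where $\bar S=H\setminus S$; that is, the oriented map associated with the dual covered map is the dual oriented map.
   Context: Permutations compose right to left. A map is $M=(H,\sigma,\alpha)$ with $H$ finite, $\alpha$ a fixed-point-free involution, $\sigma$ a permutation, $\langle\sigma,\alpha\rangle$ transitive, root $r\in H$; $\phi=\sigma\alpha$. The dual map is $M^*=(H,\phi,\alpha)$ with the same root. For $S\subseteq H$, $\pi_{|S}$ is obtained from the cycles of $\pi$ by erasing elements not in $S$. A covered map is $(M,S)$ with $S$ stable by $\alpha$ and $(S,\sigma_{|S},\alpha_{|S})$ a connecting unicellular map ($\sigma_{|S},\alpha_{|S}$ transitive on $S$, $S$ meets every cycle of $\sigma$ — $S=\emptyset$ allowed if $\sigma$ has one cycle — and $\sigma_{|S}\alpha_{|S}$ cyclic); its dual is $(M^*,\bar S)$, which is again a covered map. For a covered map $(M,S)$ the motion function $\theta(h)=\sigma\alpha(h)$ ($h\in S$), $\theta(h)=\sigma(h)$ ($h\notin S$) is cyclic, and the appearance order is $r\prec_S\theta(r)\prec_S\cdots\prec_S\theta^{|H|-1}(r)$. $\Delta(M,S)=(M,(I,O))$ with $I=\{h\in S:\alpha(h)\prec_S h\}\cup\{h\notin S:h\prec_S\alpha(h)\}$, $O=H\setminus I$ (computed for $(M^*,\bar S)$ with the motion function and appearance order of $(M^*,\bar S)$). *)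

(* Defs.v *)
From mathcomp Require Import all_boot all_fingroup.
Set Implicit Arguments. Unset Strict Implicit. Unset Printing Implicit Defensive.

Section Maps.
Variable H : finType.
Local Open Scope group_scope.

(* Permutations compose right to left: [pcomp s t] is s o t, i.e. h |-> s (t h).
   (MathComp's group product (t * s) acts left to right.) *)
Definition pcomp (s t : {perm H}) : {perm H} := (t * s)%g.

Definition phi (sigma alpha : {perm H}) : {perm H} := pcomp sigma alpha.

Definition is_map (sigma alpha : {perm H}) : Prop :=
  (forall h, alpha (alpha h) = h /\ alpha h != h) /\
  (forall x y, connect [rel u v | (v == sigma u) || (v == alpha u)] x y).

(* pi_{|S}: on h in S, the first element pi^k h (k >= 1) lying in S
   (i.e. the cycles of pi with the elements outside S erased).
   Its values outside S are irrelevant. *)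
Definition restr (pi : {perm H}) (S : {set H}) (h : H) : H :=
  let t := traject pi (pi h) #|H| in
  nth h t (find (fun y => y \in S) t).

Definition connecting_unicellular (sigma alpha : {perm H}) (S : {set H}) : Prop :=
  let sS := restr sigma S in
  let aS := restr alpha S in
  (forall x y, x \in S -> y \in S ->
     connect [rel u v | (u \in S) && ((v == sS u) || (v == aS u))] x y) /\
  ((forall h, exists2 h', h' \in S & fconnect sigma h h') \/
   (S = set0 /\ forall x y, fconnect sigma x y)) /\
  (forall x y, x \in S -> y \in S -> fconnect (fun u => sS (aS u)) x y).

Definition covered_map (sigma alpha : {perm H}) (S : {set H}) : Prop :=
  is_map sigma alpha /\
  (forall h, (alpha h \in S) = (h \in S)) /\
  connecting_unicellular sigma alpha S.

Definition motion (sigma alpha : {perm H}) (S : {set H}) (h : H) : H :=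
  if h \in S then sigma (alpha h) else sigma h.

Definition appear_prec (sigma alpha : {perm H}) (S : {set H}) (r h h' : H) : bool :=
  findex (motion sigma alpha S) r h < findex (motion sigma alpha S) r h'.

(* Delta(M,S) = (M,(I,O)); we return the pair (I,O). *)
Definition Delta (sigma alpha : {perm H}) (r : H) (S : {set H})
  : {set H} * {set H} :=
  let I := [set h | if h \in S then appear_prec sigma alpha S r (alpha h) h
                    else appear_prec sigma alpha S r h (alpha h)] in
  (I, ~: I).

End Maps.

(* Main.v *)
Require Import Defs.
From mathcomp Require Import all_boot all_fingroup.
From Stdlib Require Import FunctionalExtensionality.

Set Implicit Arguments. Unset Strict Implicit. Unset Printing Implicit Defensive.

Section Aux.
Variable H : finType.
Implicit Types (sigma alpha : {perm H}) (S : {set H}).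

Lemma order_le_card (f : H -> H) (x : H) : fingraph.order f x <= #|H|.
Proof.
exact: max_card.
Qed.

Lemma restr_spec (pi : {perm H}) S h : h \in S ->
  restr pi S h \in S /\
  exists j, restr pi S h = iter j pi (pi h) /\
    forall i, i < j -> iter i pi (pi h) \notin S.
Proof.
move=> hS; rewrite /restr.
set t := traject pi (pi h) #|H|.
have ordS : (fingraph.order pi h).-1.+1 = fingraph.order pi h by rewrite prednK // order_gt0.
have ltn_ord : (fingraph.order pi h).-1 < #|H|.
  by rewrite -ltnS ordS ltnS; apply: leq_trans (order_le_card _ _) _.
have hast : has (fun y => y \in S) t.
  apply/hasP; exists h => //.
  have -> : h = nth h t (fingraph.order pi h).-1.
    rewrite /t (set_nth_default (pi h)) ?size_traject // nth_traject // -iterSr ordS iter_order //; exact: perm_inj.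
  by rewrite mem_nth // size_traject.
have fs : find (fun y => y \in S) t < #|H| by have := hast; rewrite has_find size_traject.
split; first exact: (nth_find h hast).
exists (find (fun y => y \in S) t); split; first by rewrite /t (set_nth_default (pi h)) ?size_traject // nth_traject.
move=> i lti; have := before_find h lti.
rewrite /t (set_nth_default (pi h)) ?size_traject ?nth_traject; first by move=> ->.
all: exact: ltn_trans lti fs.
Qed.


Section Cyc.
Variables (sigma alpha : {perm H}) (S : {set H}).
Let th := motion sigma alpha S.
Hypothesis stab : forall h, (alpha h \in S) = (h \in S).

Lemma th_inj : injective th.
Proof.
move=> x y; rewrite /th /motion.
case xS: (x \in S); case yS: (y \in S) => /perm_inj // e.
- by move: (perm_inj e).
- by move: yS; rewrite -e stab xS.
- by move: xS; rewrite e stab yS.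
Qed.

Lemma walk j x : (forall i, i < j -> iter i sigma x \notin S) ->
  iter j th x = iter j sigma x.
Proof.
elim: j => [//|j IH] hi; rewrite !iterS IH; last by move=> i lt; apply: hi; exact: ltnW.
by rewrite /th /motion (negbTE (hi j (ltnSn j))).
Qed.

Lemma reachS n h : iter n sigma h \in S -> exists m, iter m th h \in S.
Proof.
elim: n h => [|n IH] h; first by exists 0.
case hS: (h \in S); first by exists 0.
rewrite iterSr => /IH [m hm]; exists m.+1.
by rewrite iterSr {2}/th /motion hS.
Qed.

Lemma step u : u \in S ->
  restr sigma S (restr alpha S u) \in S /\
  fconnect th u (restr sigma S (restr alpha S u)).
Proof.
move=> uS.
have [_ [j [ej hj]]] := restr_spec alpha uS.
have ea : restr alpha S u = alpha u.
  case: j ej hj => [//|j] _ hj.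
  by have := hj 0 (ltn0Sn j); rewrite /= stab uS.
rewrite ea; have vS : alpha u \in S by rewrite stab.
have [inS [k [ek hk]]] := restr_spec sigma vS.
split; first by rewrite ek -ek.
rewrite ek; apply: (connect_trans (fconnect1 th u)).
have -> : th u = sigma (alpha u) by rewrite /th /motion uS.
rewrite -walk //; exact: fconnect_iter.
Qed.

Lemma inS_conn s s' : s \in S ->
  fconnect (fun u => restr sigma S (restr alpha S u)) s s' -> fconnect th s s'.
Proof.
move=> sS /iter_findex <-.
set g := (fun u => _).
suff: forall n, iter n g s \in S /\ fconnect th s (iter n g s) by move=> /(_ (findex g s s')) [].
elim=> [|n [IHS IHc]]; first by split => //; exact: connect0.
rewrite iterS; have [h1 h2] := step IHS; split => //.
exact: connect_trans IHc h2.
Qed.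
End Cyc.

Lemma th_cyclic sigma alpha S r : covered_map sigma alpha S ->
  forall h, fconnect (motion sigma alpha S) r h.
Proof.
case=> [[ainv _] [stab [_ [cov cyc]]]] h.
case: cov => [cov | [S0 one]].
- have toS x : exists2 s, s \in S & fconnect (motion sigma alpha S) x s.
    have [h' h'S /iter_findex e] := cov x; rewrite -e in h'S.
    have [m hm] := @reachS sigma alpha S _ _ h'S; exists (iter m (motion sigma alpha S) x) => //.
    exact: fconnect_iter.
  have [sr srS csr] := toS r; have [sh shS csh] := toS h.
  apply: connect_trans csr _; apply: connect_trans (@inS_conn sigma alpha S stab _ _ srS (cyc _ _ srS shS)) _.
  by rewrite (fconnect_sym (@th_inj sigma alpha S stab)).
- subst S; rewrite (@eq_fconnect _ _ sigma) // => x; by rewrite /motion inE.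
Qed.

End Aux.

Theorem mainTheorem12 (H : finType) (sigma alpha : {perm H}) (r : H)
  (S : {set H}) :
  covered_map sigma alpha S ->
  Delta (phi sigma alpha) alpha r (~: S) =
    ((Delta sigma alpha r S).2, (Delta sigma alpha r S).1).
Proof.
move=> cm; have cyc := th_cyclic r cm.
have [[ainv _] _] := cm.
have eqm : motion (phi sigma alpha) alpha (~: S) = motion sigma alpha S.
  apply: functional_extensionality => h.
  rewrite /motion /phi /pcomp inE !permM; case: (h \in S) => //=.
  by rewrite (proj1 (ainv h)).
set th := motion sigma alpha S in cyc.
have tot x : (findex th r x < findex th r (alpha x)) =
             ~~ (findex th r (alpha x) < findex th r x).
  case: (ltngtP (findex th r x) (findex th r (alpha x))) => // e.
  exfalso; have := proj2 (ainv x); rewrite eq_sym; move/eqP; apply.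
  have hx := cyc x; have hax := cyc (alpha x).
  rewrite fconnect_orbit in hx; rewrite fconnect_orbit in hax.
  have e1 := nth_index x hx; have e2 := nth_index x hax.
  move: e; rewrite /findex => e; rewrite e in e1.
  by rewrite -{1}e1 e2.
rewrite /Delta /appear_prec eqm /= -/th.
congr pair; apply/setP => h; rewrite !inE; case: (h \in S) => /=; by rewrite ?tot ?negbK.
Qed.
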